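(* Let $R$ be a ring and $T$ a left denominator set of $R$ with $\mathrm{ass}(T)=0$ such that $T^{-1}R=R_1\times\cdots\times R_n$ is a direct product of left localization maximal rings $R_1,\ldots,R_n$. Let $\tau:R\to T^{-1}R$, $r\mapsto\frac{r}{1}=(r_1,\ldots,r_n)$. For $i=1,\ldots,n$ put $S_i:=R_1\times\cdots\times R_i^*\times\cdots\times R_n$ (with $R_i^*$ the group of units of $R_i$ in the $i$-th place) and $T_i:=\tau^{-1}(S_i)$. Then $\max\mathrm{Den}_l(R)=\{T_1,\ldots,T_n\}$ and $T_i^{-1}R\cong R_i$ for each $i$.
   Context: All rings are associative with $1$. A multiplicative subset $S$ of $R$ ($1\in S$, $0\notin S$, closed under multiplication) is a left Ore set if $Sr\cap Rs\neq\emptyset$ for all $r\in R$, $s\in S$; for it, $\mathrm{ass}(S):=\{r\in R: sr=0\text{ for some } s\in S\}$. A left Ore set $S$ is a left denominator set if $rs=0$ ($r\in R$, $s\in S$) implies $tr=0$ for some $t\in S$. $\mathrm{Den}_l(R)$ is the set of left denominator sets, $S^{-1}R$ the left localization, $\max\mathrm{Den}_l(R)$ the set of maximal elements of $(\mathrm{Den}_l(R),\subseteq)$. For a ring $A$, $S_0(A)$ is the largest left Ore set of $A$ consisting of regular elements and $Q_l(A):=S_0(A)^{-1}A$. A ring $A$ is a left localization maximal ring if $A=Q_l(A)$ (i.e. $S_0(A)$ consists of units) and $\{\mathrm{ass}(S):S\in\mathrm{Den}_l(A)\}=\{0\}$. *)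

(* Defs.v *)
From HB Require Import structures.
From mathcomp Require Import all_boot all_order all_algebra.
Set Implicit Arguments. Unset Strict Implicit. Unset Printing Implicit Defensive.
Import GRing.Theory.
Local Open Scope ring_scope.

Section ProdRing.
Variables (n : nat) (R_ : 'I_n -> nzRingType).

Definition prodR := {dffun forall i : 'I_n, R_ i}.
HB.instance Definition _ := Choice.on prodR.

Definition pr_zero : prodR := [ffun i => 0].
Definition pr_one : prodR := [ffun i => 1].
Definition pr_opp (a : prodR) : prodR := [ffun i => - a i].
Definition pr_add (a b : prodR) : prodR := [ffun i => a i + b i].
Definition pr_mul (a b : prodR) : prodR := [ffun i => a i * b i].

Lemma pr_addA : associative pr_add.
Proof. by move=> a b c; apply/ffunP => i; rewrite !ffunE addrA. Qed.
Lemma pr_addC : commutative pr_add.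
Proof. by move=> a b; apply/ffunP => i; rewrite !ffunE addrC. Qed.
Lemma pr_add0 : left_id pr_zero pr_add.
Proof. by move=> a; apply/ffunP => i; rewrite !ffunE add0r. Qed.
Lemma pr_addN : left_inverse pr_zero pr_opp pr_add.
Proof. by move=> a; apply/ffunP => i; rewrite !ffunE addNr. Qed.

HB.instance Definition _ :=
  GRing.isZmodule.Build prodR pr_addA pr_addC pr_add0 pr_addN.

Lemma pr_mulA : associative pr_mul.
Proof. by move=> a b c; apply/ffunP => i; rewrite !ffunE mulrA. Qed.
Lemma pr_mul1 : left_id pr_one pr_mul.
Proof. by move=> a; apply/ffunP => i; rewrite !ffunE mul1r. Qed.
Lemma pr_mulr1 : right_id pr_one pr_mul.
Proof. by move=> a; apply/ffunP => i; rewrite !ffunE mulr1. Qed.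
Lemma pr_mulDl : left_distributive pr_mul (@GRing.add prodR).
Proof. by move=> a b c; apply/ffunP => i; rewrite !ffunE mulrDl. Qed.
Lemma pr_mulDr : right_distributive pr_mul (@GRing.add prodR).
Proof. by move=> a b c; apply/ffunP => i; rewrite !ffunE mulrDr. Qed.

HB.instance Definition _ :=
  GRing.Zmodule_isPzRing.Build prodR pr_mulA pr_mul1 pr_mulr1 pr_mulDl pr_mulDr.

Lemma prodR_mulE (a b : prodR) i : (a * b) i = a i * b i.
Proof. by rewrite /GRing.mul /= ffunE. Qed.
End ProdRing.

Definition is_unit (R : pzRingType) (x : R) : Prop :=
  exists y : R, x * y = 1 /\ y * x = 1.

Section Ore.
Variable R : pzRingType.

Definition multiplicative (S : R -> Prop) : Prop :=
  [/\ S 1, ~ S 0 & forall s t, S s -> S t -> S (s * t)].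

Definition left_Ore (S : R -> Prop) : Prop :=
  multiplicative S /\
  forall (r s : R), S s -> exists (s' r' : R), S s' /\ s' * r = r' * s.

Definition ass (S : R -> Prop) (r : R) : Prop := exists s, S s /\ s * r = 0.

Definition left_den (S : R -> Prop) : Prop :=
  left_Ore S /\
  forall (r s : R), S s -> r * s = 0 -> exists t, S t /\ t * r = 0.

Definition max_left_den (S : R -> Prop) : Prop :=
  left_den S /\
  forall S' : R -> Prop, left_den S' -> (forall x, S x -> S' x) ->
    forall x, S' x -> S x.

Definition regular (x : R) : Prop :=
  (forall y, x * y = 0 -> y = 0) /\ (forall y, y * x = 0 -> y = 0).

Definition is_S0 (S : R -> Prop) : Prop :=
  [/\ left_Ore S, (forall x, S x -> regular x) &
      forall S' : R -> Prop, left_Ore S' -> (forall x, S' x -> regular x) ->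
        forall x, S' x -> S x].

(** [f : R -> A] is a left localization of R at S, i.e. (A, f) = (S^{-1}R, r |-> r/1)
   up to isomorphism: f(S) consists of units, every element of A is a left
   fraction f(s)^{-1} f(r), and ker f = ass(S). *)
Definition is_left_localization (S : R -> Prop) (A : pzRingType)
    (f : {rmorphism R -> A}) : Prop :=
  [/\ forall s, S s -> is_unit (f s),
      forall a : A, exists s r, S s /\ f s * a = f r &
      forall r, f r = 0 <-> ass S r].
End Ore.

(** left localization maximal ring: Q_l(A) = A, i.e. S_0(A) consists of units,
   and ass(S) = 0 for every left denominator set S of A. *)
Definition left_loc_max (A : pzRingType) : Prop :=
  (exists S0 : A -> Prop, is_S0 S0 /\ forall x, S0 x -> is_unit x) /\
  (forall S : A -> Prop, left_den S -> forall r, ass S r -> r = 0).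

(* Main.v *)
Require Import Defs.
From HB Require Import structures.
From mathcomp Require Import all_boot all_order all_algebra.
From Stdlib Require Import Classical FunctionalExtensionality PropExtensionality.
Set Implicit Arguments. Unset Strict Implicit. Unset Printing Implicit Defensive.
Import GRing.Theory.
Local Open Scope ring_scope.

Section Basics.
Variables (n : nat) (R_ : 'I_n -> nzRingType).
Lemma pr1E i : (1 : prodR R_) i = 1.
Proof. by rewrite /GRing.one /= ffunE. Qed.
Lemma pr0E i : (0 : prodR R_) i = 0.
Proof. by rewrite /GRing.zero /= ffunE. Qed.
Lemma prBE (a b : prodR R_) i : (a - b) i = a i - b i.
Proof. by rewrite /GRing.add /GRing.opp /= !ffunE. Qed.

Definition inj (i : 'I_n) (a : R_ i) : prodR R_ :=
  @finfun _ (fun j => GRing.NzRing.sort (R_ j))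
    (fun j => match @eqP _ i j return R_ j with ReflectT e => ecast k (R_ k) e a | ReflectF _ => 0 end).
Arguments inj : clear implicits.
Arguments inj i a.
Lemma injE i a : inj i a i = a.
Proof. rewrite /inj ffunE; case: eqP => // e; by rewrite eq_axiomK. Qed.
Lemma injE0 i a j : i != j -> inj i a j = 0.
Proof. by rewrite /inj ffunE; case: eqP. Qed.
End Basics.
Arguments inj {n R_} i a.

Section Proj.
Variables (R : nzRingType) (n : nat) (R_ : 'I_n -> nzRingType)
  (tau : {rmorphism R -> prodR R_}) (i : 'I_n).
Definition ptau (r : R) : R_ i := tau r i.
Lemma ptau_zmod : zmod_morphism ptau.
Proof. by move=> x y; rewrite /ptau rmorphB prBE. Qed.
Lemma ptau_mon : monoid_morphism ptau.
Proof. by split; [rewrite /ptau rmorph1 pr1E | move=> x y; rewrite /ptau rmorphM prodR_mulE]. Qed.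
HB.instance Definition _ := GRing.isZmodMorphism.Build R (R_ i) ptau ptau_zmod.
HB.instance Definition _ := GRing.isMonoidMorphism.Build R (R_ i) ptau ptau_mon.
Definition ptauM : {rmorphism R -> R_ i} := ptau.
End Proj.

Lemma unit_mul (A : pzRingType) (a b : A) : is_unit a -> is_unit b -> is_unit (a * b).
Proof.
move=> [x [ax xa]] [y [by' yb]]; exists (y * x); split.
  by rewrite -mulrA (mulrA b) by' mul1r ax.
by rewrite -mulrA (mulrA x) xa mul1r yb.
Qed.

Lemma unit_nz (A : nzRingType) : ~ is_unit (0 : A).
Proof. move=> [y [h _]]; move: h; rewrite mul0r => /eqP; by rewrite eq_sym oner_eq0. Qed.

Section Main.
Variables (R : nzRingType) (T : R -> Prop) (n : nat) (R_ : 'I_n -> nzRingType)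
  (tau : {rmorphism R -> prodR R_}).
Hypotheses (HT : left_den T) (HassT : forall r, ass T r -> r = 0)
  (Hmax : forall i, left_loc_max (R_ i)) (Hloc : is_left_localization T tau).

Definition Ti i (r : R) := is_unit (tau r i).

Lemma tau_inj0 r : tau r = 0 -> r = 0.
Proof. by case: Hloc => _ _ Hk /Hk /HassT. Qed.

Lemma unit_comp (x : prodR R_) i : is_unit x -> is_unit (x i).
Proof.
move=> [y [xy yx]]; exists (y i).
split; [rewrite -prodR_mulE xy | rewrite -prodR_mulE yx]; exact: pr1E.
Qed.

Lemma T_Ti i t : T t -> Ti i t.
Proof. by case: Hloc => Hu _ _ Tt; apply: unit_comp; apply: Hu. Qed.

Lemma lift i (a : R_ i) : exists t q, T t /\ tau t * inj i a = tau q.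
Proof. by case: Hloc => _ Hs _; apply: Hs. Qed.

Lemma liftE i (a : R_ i) t q : tau t * inj i a = tau q ->
  tau t i * a = tau q i /\ forall j, i != j -> tau q j = 0.
Proof.
move=> H; split; first by rewrite -H prodR_mulE injE.
by move=> j ne; rewrite -H prodR_mulE injE0 // mulr0.
Qed.

Lemma Kl i r : tau r i = 0 -> exists s, Ti i s /\ s * r = 0.
Proof.
move=> Hr; have [t0 [q0 [Tt0 Hq]]] := lift (1 : R_ i).
exists q0; split.
  by rewrite /Ti -Hq prodR_mulE injE mulr1; exact: T_Ti.
apply: tau_inj0; apply/ffunP => j.
rewrite rmorphM prodR_mulE -Hq prodR_mulE pr0E.
case: (eqVneq i j) => [<-|ne]; first by rewrite Hr mulr0.
by rewrite injE0 // mulr0 mul0r.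
Qed.

Lemma Ti_den i : left_den (Ti i).
Proof.
split; [split; [split|]|].
- by rewrite /Ti rmorph1 pr1E; exists 1; rewrite mulr1.
- by rewrite /Ti rmorph0 pr0E; apply: unit_nz.
- by move=> s t; rewrite /Ti rmorphM prodR_mulE; apply: unit_mul.
- move=> r s [v [sv vs]].
  have [t1 [q1 [Tt1 H1]]] := lift (tau r i * v).
  have [t0 [q0 [Tt0 H0]]] := lift (1 : R_ i).
  exists (q0 * t1), (q0 * q1); split.
    rewrite /Ti rmorphM prodR_mulE -H0 prodR_mulE injE mulr1.
    by apply: unit_mul; apply: T_Ti.
  apply/eqP; rewrite -subr_eq0; apply/eqP; apply: tau_inj0; rewrite rmorphB; apply/ffunP => j.
  rewrite prBE pr0E !rmorphM !prodR_mulE -H0 -H1 !prodR_mulE.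
  case: (eqVneq i j) => [<-|ne].
    by rewrite !injE !mulr1 -!mulrA vs mulr1 subrr.
  by rewrite injE0 // !mulr0 !mul0r subrr.
- move=> r s [v [sv vs]] Hrs.
  apply: Kl.
  have : tau r i * tau s i = 0 by rewrite -prodR_mulE -rmorphM Hrs rmorph0 pr0E.
  by move=> /(congr1 (fun x => x * v)); rewrite -mulrA sv mulr1 mul0r.
Qed.

Lemma key (M : R -> Prop) i : left_den M -> (forall t, T t -> M t) ->
  (forall m, M m -> tau m i <> 0) -> forall m, M m -> Ti i m.
Proof.
move=> [[[M1 M0 MM] MOre] Mden] TM Mnz.
pose N := fun a : R_ i => exists m, M m /\ a = tau m i.
have NOre : left_Ore N.
  split; first split.
  - by exists 1; split => //; rewrite rmorph1 pr1E.
  - by move=> [m [Mm e]]; apply: (Mnz m Mm); rewrite -e.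
  - move=> a b [m [Mm ->]] [m' [Mm' ->]]; exists (m * m'); split; first exact: MM.
    by rewrite rmorphM prodR_mulE.
  move=> a b [m [Mm ->]].
  have [t [q [Tt Hq]]] := lift a.
  have [Hqi _] := liftE Hq.
  have [m' [r' [Mm' E]]] := MOre q m Mm.
  exists (tau (m' * t) i), (tau r' i); split.
    by exists (m' * t); split => //; apply: MM => //; apply: TM.
  by rewrite rmorphM prodR_mulE -mulrA Hqi -prodR_mulE -rmorphM E rmorphM prodR_mulE.
have Nden : left_den N.
  split => // a b [m [Mm ->]] Hab.
  have [t [q [Tt Hq]]] := lift a.
  have [Hqi Hqj] := liftE Hq.
  have qm0 : q * m = 0.
    apply: tau_inj0; apply/ffunP => j; rewrite rmorphM prodR_mulE pr0E.
    case: (eqVneq i j) => [<-|ne]; last by rewrite Hqj // mul0r.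
    by rewrite -Hqi -mulrA Hab mulr0.
  have [m'' [Mm'' E]] := Mden q m Mm qm0.
  exists (tau (m'' * t) i); split.
    by exists (m'' * t); split => //; apply: MM => //; apply: TM.
  by rewrite rmorphM prodR_mulE -mulrA Hqi -prodR_mulE -rmorphM E rmorph0 pr0E.
have [[S0 [[_ _ S0max] S0u]] assN] := Hmax i.
have Nreg : forall x, N x -> regular x.
  move=> x Nx; split => y Hy; first by apply: (assN N Nden); exists x.
  have [n' [Nn' E]] := Nden.2 y x Nx Hy.
  by apply: (assN N Nden); exists n'.
move=> m Mm; apply: S0u; apply: (S0max N NOre Nreg); by exists m.
Qed.

Inductive gen (S : R -> Prop) : R -> Prop :=
| gS x : S x -> gen S x
| gT x : T x -> gen S x
| gM x y : gen S x -> gen S y -> gen S (x * y).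

Lemma gen_den S : left_den S -> left_den (gen S).
Proof.
move=> [[[S1 S0 SM] SOre] Sden].
case: HT => [[[T1 T0 TM] TOre] Tden].
have P : forall x, gen S x -> forall r, r * x = 0 -> exists s, S s /\ s * r = 0.
  move=> x; elim => {x}.
  - by move=> x Sx r Hr; apply: Sden Hr.
  - move=> x Tx r Hr; have [t [Tt Htr]] := Tden r x Tx Hr.
    by exists 1; split => //; rewrite mul1r; apply: HassT; exists t.
  - move=> x y _ IHx _ IHy r Hr.
    have [s [Ss Hs]] := IHy (r * x) ltac:(by rewrite -mulrA).
    have [s' [Ss' Hs']] := IHx (s * r) ltac:(by rewrite -mulrA).
    by exists (s' * s); split; [apply: SM | rewrite -mulrA].
split; [split; [split|]|].
- exact: gS.
- move=> /P /(_ 1) []; first by rewrite mulr0.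
  by move=> s [Ss]; rewrite mulr1 => E; apply: S0; rewrite -E.
- exact: gM.
- move=> r x; move=> Gx; elim: Gx r => {x}.
  + move=> x Sx r; have [s' [r' [Ss' E]]] := SOre r x Sx.
    by exists s', r'; split => //; apply: gS.
  + move=> x Tx r; have [s' [r' [Ts' E]]] := TOre r x Tx.
    by exists s', r'; split => //; apply: gT.
  + move=> x y _ IHx _ IHy r.
    have [m1 [r1 [G1 E1]]] := IHy r.
    have [m2 [r2 [G2 E2]]] := IHx r1.
    exists (m2 * m1), r2; split; first exact: gM.
    by rewrite -mulrA E1 mulrA E2 mulrA.
- move=> r x Gx; elim: Gx r => {x}.
  + move=> x Sx r Hr; have [s [Ss E]] := Sden r x Sx Hr.
    by exists s; split => //; apply: gS.
  + move=> x Tx r Hr; have [s [Ts E]] := Tden r x Tx Hr.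
    by exists s; split => //; apply: gT.
  + move=> x y _ IHx _ IHy r Hr.
    have [m1 [G1 E1]] := IHy (r * x) ltac:(by rewrite -mulrA).
    have [m2 [G2 E2]] := IHx (m1 * r) ltac:(by rewrite -mulrA).
    by exists (m2 * m1); split; [apply: gM | rewrite -mulrA].
Qed.

Lemma T_in_max S : max_left_den S -> forall t, T t -> S t.
Proof.
move=> [HS Hm] t Tt.
exact: (Hm (gen S) (gen_den HS) (fun x Sx => gS Sx) t (gT S Tt)).
Qed.

Lemma zero_index S : left_den S -> exists i, forall s, S s -> tau s i <> 0.
Proof.
move=> [[[S1 S0 SM] _] _].
apply: NNPP => H.
have H' : forall i, exists s, S s /\ tau s i = 0.
  move=> i; apply: NNPP => H2; apply: H; exists i => s Ss e; apply: H2.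
  by exists s.
have : forall l : seq 'I_n, exists s, S s /\ forall j, j \in l -> tau s j = 0.
  elim => [|a l [s [Ss Hs]]].
    by exists 1; split => // j; rewrite in_nil.
  have [s' [Ss' Hs']] := H' a.
  exists (s * s'); split; first exact: SM.
  move=> j; rewrite in_cons => /orP [/eqP ->|jl].
    by rewrite rmorphM prodR_mulE Hs' mulr0.
  by rewrite rmorphM prodR_mulE Hs // mul0r.
move=> /(_ (enum 'I_n)) [s [Ss Hs]].
have s0 : s = 0.
  by apply: tau_inj0; apply/ffunP => j; rewrite pr0E Hs // mem_enum.
by apply: S0; rewrite -s0.
Qed.

Lemma Ti_inj i j : (forall r, Ti i r -> Ti j r) -> i = j.
Proof.
move=> H; case: (eqVneq i j) => // ne.
have [t0 [q0 [Tt0 Hq]]] := lift (1 : R_ i).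
have [Hqi Hqj] := liftE Hq.
have : Ti j q0 by apply: H; rewrite /Ti -Hqi mulr1; apply: T_Ti.
by rewrite /Ti Hqj // => /unit_nz.
Qed.

Lemma max_Ti i : max_left_den (Ti i).
Proof.
split; first exact: Ti_den.
move=> S' HS' sub; apply: (key HS').
  by move=> t Tt; apply: sub; apply: T_Ti.
move=> m Sm Hm; have [s [Tis E]] := Kl Hm.
case: HS' => [[[_ S0 SM] _] _]; apply: S0; rewrite -E.
by apply: SM => //; apply: sub.
Qed.

Lemma part2 i : exists f : {rmorphism R -> R_ i}, is_left_localization (Ti i) f.
Proof.
exists (ptauM tau i); split.
- by [].
- move=> a; have [t [q [Tt Hq]]] := lift a; have [Hqi _] := liftE Hq.
  by exists t, q; split; [apply: T_Ti | exact: Hqi].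
- move=> r; split; first exact: Kl.
  move=> [s [[v [sv vs]] Hsr]].
  have : tau s i * tau r i = 0 by rewrite -prodR_mulE -rmorphM Hsr rmorph0 pr0E.
  by move=> /(congr1 (fun x => v * x)); rewrite mulrA vs mul1r mulr0.
Qed.

Lemma main :
  let T_ := fun (i : 'I_n) (r : R) => is_unit (tau r i) in
  (forall S : R -> Prop,
     max_left_den S <-> exists i : 'I_n, forall r, S r <-> T_ i r) /\
  (forall i : 'I_n, exists f : {rmorphism R -> R_ i},
     is_left_localization (T_ i) f).
Proof.
move=> T_; split; last exact: part2.
move=> S; split.
  move=> HS; have [i Hi] := zero_index HS.1.
  exists i.
  have sub : forall r, S r -> Ti i r := key HS.1 (T_in_max HS) Hi.
  by move=> r; split; [apply: sub | move=> Tr; exact: (HS.2 _ (Ti_den i) sub r Tr)].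
move=> [i Hi].
have -> : S = Ti i.
  by apply: functional_extensionality => r; apply: propositional_extensionality.
exact: max_Ti.
Qed.

End Main.

Theorem theorem3p12 (R : nzRingType) (T : R -> Prop) (n : nat)
    (R_ : 'I_n -> nzRingType)
    (tau : {rmorphism R -> prodR R_}) :
  left_den T ->
  (forall r, ass T r -> r = 0) ->
  (forall i, left_loc_max (R_ i)) ->
  is_left_localization T tau ->
  let T_ := fun (i : 'I_n) (r : R) => is_unit (tau r i) in
  (forall S : R -> Prop,
     max_left_den S <-> exists i : 'I_n, forall r, S r <-> T_ i r) /\
  (forall i : 'I_n, exists f : {rmorphism R -> R_ i},
     is_left_localization (T_ i) f).
Proof.
move=> HT HassT Hmax Hloc; exact: (@main R T n R_ tau HT HassT Hmax Hloc).
Qed.
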